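(* Let $u$ be any configuration on $K_{m,n}$. Consider the following procedure. Set $v_0=\mathrm{park}(u)$, $f_0=0$ and $k=0$. While the value of $v_k$ at the sink $a_m$ is $\ge 0$: choose an index $i$ with $(v_k)_{b_i}=0$ (such an index always exists), set $v_{k+1}=\mathrm{park}(v_k-e_{b_i})$, $f_{k+1}=f_k+e_{b_i}$, and increase $k$ by one. Then this procedure is always executable and terminates after some finite number $N$ of iterations, and for any choice of the indices $i$ along the way, the final configuration $f_N$ is a proof for the rank of $u$; in particular $\mathrm{rank}(u)=N-1=\mathrm{degree}(f_N)-1$.
   Context: Let $m,n\ge 1$. $K_{m,n}$ is the complete bipartite graph with vertex set $V=A_m\sqcup B_n$, $A_m=\{a_1,\dots,a_m\}$, $B_n=\{b_1,\dots,b_n\}$, with exactly one edge $\{a_i,b_j\}$ for every $i,j$ and no other edges; the vertex $a_m$ is called the sink. A configuration is a function $u:V\to\mathbb Z$, written $u_c=u(c)$; $\mathrm{degree}(u)=\sum_{c\in V}u_c$. For $c\in V$, $e_c$ is the configuration equal to $1$ at $c$ and $0$ elsewhere. For $c\in V$ with graph degree $d_c$ (so $d_{a_i}=n$, $d_{b_j}=m$), the toppling vector is $\Delta^{(c)}=d_c e_c-\sum_{c'\text{ adjacent to }c}e_{c'}$, and for $C\subseteq V$, $\Delta^{(C)}=\sum_{c\in C}\Delta^{(c)}$. Two configurations are toppling equivalent if their difference is an integer linear combination of the vectors $\Delta^{(c)}$, $c\in V$. A configuration is effective if it is toppling equivalent to a configuration with all values $\ge 0$ (non-negative). The rank is $\mathrm{rank}(u)=-1+\min\{\mathrm{degree}(f):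 f \text{ non-negative and } u-f \text{ not effective}\}$. A proof for the rank of $u$ is a non-negative configuration $f$ such that $u-f$ is not effective and $\mathrm{degree}(f)=\mathrm{rank}(u)+1$. A configuration $u$ is parking (with respect to the sink $a_m$) if $u_c\ge 0$ for every $c\neq a_m$ and, for every non-empty $C\subseteq V\setminus\{a_m\}$, the configuration $u-\Delta^{(C)}$ takes a negative value at some vertex other than $a_m$. Every configuration $u$ is toppling equivalent to exactly one parking configuration, denoted $\mathrm{park}(u)$; and $u$ is effective if and only if $\mathrm{park}(u)$ is non-negative (i.e. its value at the sink is $\ge 0$). *)

(* Defs.v *)
From HB Require Import structures.
From mathcomp Require Import all_boot all_order all_algebra.
From Stdlib Require Import ClassicalEpsilon.
Set Implicit Arguments. Unset Strict Implicit. Unset Printing Implicit Defensive.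
Import Order.TTheory GRing.Theory Num.Theory.
Local Open Scope ring_scope.

(* Vertices: inl i = a_{i+1} (i : 'I_m), inr j = b_{j+1} (j : 'I_n). *)
Definition vert (m n : nat) : finType := ('I_m + 'I_n)%type.

Definition config (m n : nat) := vert m n -> int.

Lemma sink_lt (m : nat) (hm : (0 < m)%N) : (m.-1 < m)%N.
Proof. by rewrite ltn_predL. Qed.

Definition sink (m n : nat) (hm : (0 < m)%N) : vert m n :=
  inl (Ordinal (sink_lt hm)).

Definition bvert (m n : nat) (j : 'I_n) : vert m n := inr j.

Definition adj (m n : nat) (c c' : vert m n) : bool :=
  match c, c' with
  | inl _, inr _ => true
  | inr _, inl _ => true
  | _, _ => false
  end.

Definition gdeg (m n : nat) (c : vert m n) : int :=
  match c with inl _ => n%:Z | inr _ => m%:Z end.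

Definition degree (m n : nat) (u : config m n) : int := \sum_(c : vert m n) u c.

Definition unitc (m n : nat) (c : vert m n) : config m n :=
  fun c' => if c' == c then 1 else 0.

Definition cadd (m n : nat) (u w : config m n) : config m n := fun c => u c + w c.
Definition csub (m n : nat) (u w : config m n) : config m n := fun c => u c - w c.
Definition czero (m n : nat) : config m n := fun _ => 0.

Definition topple (m n : nat) (c : vert m n) : config m n :=
  fun c' => gdeg c * unitc c c' - \sum_(d : vert m n | adj c d) unitc d c'.

Definition toppleset (m n : nat) (C : {set vert m n}) : config m n :=
  fun c' => \sum_(c in C) topple c c'.

Definition nonneg (m n : nat) (u : config m n) : Prop := forall c, 0 <= u c.

Definition topp_equiv (m n : nat) (u w : config m n) : Prop :=
  exists z : vert m n -> int,
    forall c', u c' - w c' = \sum_(c : vert m n) z c * topple c c'.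

Definition effective (m n : nat) (u : config m n) : Prop :=
  exists w, topp_equiv u w /\ nonneg w.

Definition rank_spec (m n : nat) (u : config m n) (r : int) : Prop :=
  (exists f, nonneg f /\ ~ effective (csub u f) /\ degree f = r + 1) /\
  (forall f, nonneg f -> ~ effective (csub u f) -> r + 1 <= degree f).

Definition rank (m n : nat) (u : config m n) : int :=
  epsilon (inhabits 0) (rank_spec u).

Definition rank_proof (m n : nat) (u f : config m n) : Prop :=
  nonneg f /\ ~ effective (csub u f) /\ degree f = rank u + 1.

Definition parking (m n : nat) (hm : (0 < m)%N) (u : config m n) : Prop :=
  (forall c, c != sink n hm -> 0 <= u c) /\
  (forall C : {set vert m n}, C != set0 -> sink n hm \notin C ->
     exists c, c != sink n hm /\ u c - toppleset C c < 0).

(* park(u): the (unique) parking configuration toppling equivalent to u *)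
Definition park (m n : nat) (hm : (0 < m)%N) (u : config m n) : config m n :=
  epsilon (inhabits u) (fun v => parking hm v /\ topp_equiv u v).

(* The procedure, driven by a sequence of index choices idx:
   v_0 = park u, v_{k+1} = park (v_k - e_{b_{idx k}}). *)
Fixpoint traj (m n : nat) (hm : (0 < m)%N) (u : config m n) (idx : nat -> 'I_n)
    (k : nat) : config m n :=
  match k with
  | 0 => park hm u
  | k'.+1 => park hm (csub (traj hm u idx k') (unitc (bvert m (idx k'))))
  end.

Definition ftraj (m n : nat) (idx : nat -> 'I_n) (k : nat) : config m n :=
  fun c => \sum_(j < k) unitc (bvert m (idx j)) c.

Definition legal_step (m n : nat) (hm : (0 < m)%N) (u : config m n)
    (idx : nat -> 'I_n) (k : nat) : Prop :=
  0 <= traj hm u idx k (sink n hm) /\ traj hm u idx k (bvert m (idx k)) = 0.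

(* Main.v *)
Require Import Defs.
From HB Require Import structures.
From mathcomp Require Import all_boot all_order all_algebra.
From mathcomp Require Import fingroup perm.
From mathcomp Require Import zify ring lra.
From Stdlib Require Import ClassicalEpsilon Classical.
Set Implicit Arguments. Unset Strict Implicit. Unset Printing Implicit Defensive.
Import Order.TTheory GRing.Theory Num.Theory.
Local Open Scope ring_scope.

Definition Lap {m n : nat} (z : config m n) : config m n :=
  fun c' => \sum_(c : vert m n) z c * topple c c'.

Lemma adj_sym m n (c d : vert m n) : adj c d = adj d c.
Proof. by case: c; case: d. Qed.

Lemma sum_adj m n (c c' : vert m n) :
  \sum_(d : vert m n | adj c d) unitc d c' = (adj c c')%:R.
Proof.
rewrite (big_mkcond (fun d => adj c d)) /= (bigD1 c') //= big1.
  by rewrite /unitc eqxx addr0; case: (adj c c').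
move=> d /negbTE; rewrite /unitc eq_sym => ->; by case: (adj c d).
Qed.

Lemma topple_E m n (c c' : vert m n) :
  topple c c' = gdeg c * unitc c c' - (adj c c')%:R.
Proof. by rewrite /topple sum_adj. Qed.

Lemma topple_sym m n (c c' : vert m n) : topple c c' = topple c' c.
Proof.
rewrite !topple_E /unitc.
case: (boolP (c' == c)) => [/eqP->|h]; first by rewrite eqxx.
by rewrite eq_sym (negbTE h) !mulr0 adj_sym.
Qed.

Lemma eq_lr m n (i : 'I_m) (j : 'I_n) : (inl i == inr j :> vert m n) = false.
Proof. by []. Qed.
Lemma eq_rl m n (i : 'I_m) (j : 'I_n) : (inr j == inl i :> vert m n) = false.
Proof. by []. Qed.
Lemma eq_ll m n (i i' : 'I_m) : (inl i == inl i' :> vert m n) = (i == i').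
Proof. by []. Qed.
Lemma eq_rr m n (j j' : 'I_n) : (inr j == inr j' :> vert m n) = (j == j').
Proof. by []. Qed.

Definition sA {m n : nat} (z : config m n) : int := \sum_(i < m) z (inl i).
Definition sB {m n : nat} (z : config m n) : int := \sum_(j < n) z (inr j).

Lemma LapA m n (z : config m n) i : Lap z (inl i) = n%:Z * z (inl i) - sB z.
Proof.
rewrite /Lap big_sumType /sB /=.
rewrite (eq_bigr (fun i' => z (inl i') * (n%:Z * (i == i')%:R))); last first.
  move=> i' _; rewrite topple_E /unitc eq_ll /= subr0.
  by case: (_ == _).
rewrite (eq_bigr (fun j => - z (inr j))); last first.
  by move=> j _; rewrite topple_E /unitc eq_lr mulr0 sub0r mulrN1.
rewrite sumrN (bigD1 i) //= big1.
  by rewrite eqxx addr0 mulr1 mulrC.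
by move=> i' /negbTE; rewrite eq_sym => ->; rewrite mulr0 mulr0.
Qed.

Lemma LapB m n (z : config m n) j : Lap z (inr j) = m%:Z * z (inr j) - sA z.
Proof.
rewrite /Lap big_sumType /sA /=.
rewrite [X in X + _ = _](eq_bigr (fun i => - z (inl i))); last first.
  by move=> i _; rewrite topple_E /unitc eq_rl mulr0 sub0r mulrN1.
rewrite (eq_bigr (fun j' => z (inr j') * (m%:Z * (j == j')%:R))); last first.
  move=> j' _; rewrite topple_E /unitc eq_rr /= subr0.
  by case: (_ == _).
rewrite sumrN addrC (bigD1 j) //= big1.
  by rewrite eqxx addr0 mulr1 mulrC.
by move=> j' /negbTE; rewrite eq_sym => ->; rewrite mulr0 mulr0.
Qed.

Lemma Lap_add m n (z1 z2 : config m n) c :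
  Lap (fun x => z1 x + z2 x) c = Lap z1 c + Lap z2 c.
Proof. by rewrite /Lap -big_split; apply: eq_bigr => x _; rewrite mulrDl. Qed.
Lemma Lap_opp m n (z : config m n) c : Lap (fun x => - z x) c = - Lap z c.
Proof. by rewrite /Lap -sumrN; apply: eq_bigr => x _; rewrite mulNr. Qed.
Lemma Lap_scale m n (t : int) (z : config m n) c :
  Lap (fun x => t * z x) c = t * Lap z c.
Proof. by rewrite /Lap mulr_sumr; apply: eq_bigr => x _; rewrite mulrA. Qed.
Lemma Lap0 m n (c : vert m n) : Lap (fun _ => 0) c = 0.
Proof. by rewrite /Lap big1 // => x _; rewrite mul0r. Qed.

Lemma equivE m n (u w : config m n) :
  topp_equiv u w <-> exists z, forall c, u c - w c = Lap z c.
Proof. by []. Qed.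

Lemma equiv_refl m n (u : config m n) : topp_equiv u u.
Proof. by apply/equivE; exists (fun _ => 0) => c; rewrite Lap0 subrr. Qed.

Lemma equiv_ext m n (u u' : config m n) : (forall c, u c = u' c) -> topp_equiv u u'.
Proof. by move=> h; apply/equivE; exists (fun _ => 0) => c; rewrite Lap0 h subrr. Qed.

Lemma equiv_sym m n (u w : config m n) : topp_equiv u w -> topp_equiv w u.
Proof.
move=> /equivE [z hz]; apply/equivE; exists (fun x => - z x) => c.
by rewrite Lap_opp -hz opprB.
Qed.

Lemma equiv_trans m n (u v w : config m n) :
  topp_equiv u v -> topp_equiv v w -> topp_equiv u w.
Proof.
move=> /equivE [z1 h1] /equivE [z2 h2]; apply/equivE.
exists (fun x => z1 x + z2 x) => c.
by rewrite Lap_add -h1 -h2 addrA subrK.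
Qed.

Lemma equiv_sub m n (u w h : config m n) :
  topp_equiv u w -> topp_equiv (csub u h) (csub w h).
Proof.
move=> /equivE [z hz]; apply/equivE; exists z => c.
by rewrite /csub -hz opprB addrA subrK.
Qed.

Lemma equiv_add m n (u w h : config m n) :
  topp_equiv u w -> topp_equiv (cadd u h) (cadd w h).
Proof.
move=> /equivE [z hz]; apply/equivE; exists z => c.
by rewrite /cadd -hz; ring.
Qed.

Lemma eff_equiv m n (u w : config m n) :
  topp_equiv u w -> effective u -> effective w.
Proof.
move=> huw [w0 [h1 h2]]; exists w0; split=> //.
exact: equiv_trans (equiv_sym huw) h1.
Qed.

Lemma eff_ext m n (u u' : config m n) :
  (forall c, u c = u' c) -> effective u -> effective u'.
Proof. by move=> h; apply: eff_equiv; apply: equiv_ext. Qed.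

Lemma nonneg_eff m n (u : config m n) : nonneg u -> effective u.
Proof. by move=> h; exists u; split=> //; apply: equiv_refl. Qed.

Lemma degree_Lap m n (z : config m n) : degree (Lap z) = 0.
Proof.
rewrite /degree big_sumType /=.
rewrite (eq_bigr _ (fun i _ => LapA z i)) (eq_bigr _ (fun j _ => LapB z j)).
rewrite !sumrB -!mulr_sumr !sumr_const !card_ord.
rewrite -(mulr_natr (sB z) m) -(mulr_natr (sA z) n) !natz /sA /sB.
ring.
Qed.

Lemma degree_csub m n (u w : config m n) : degree (csub u w) = degree u - degree w.
Proof. by rewrite /degree /csub sumrB. Qed.

Lemma degree_cadd m n (u w : config m n) : degree (cadd u w) = degree u + degree w.
Proof. by rewrite /degree /cadd big_split. Qed.

Lemma degree_equiv m n (u w : config m n) : topp_equiv u w -> degree u = degree w.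
Proof.
move=> /equivE [z hz]; apply/eqP; rewrite -subr_eq0 -degree_csub.
by rewrite /degree /csub (eq_bigr _ (fun c _ => hz c)) -/(degree (Lap z)) degree_Lap.
Qed.

Lemma degree_unitc m n (c : vert m n) : degree (unitc c) = 1.
Proof.
rewrite /degree (bigD1 c) //= big1 ?addr0 /unitc ?eqxx //.
by move=> c' /negbTE ->.
Qed.

Lemma degree_ext m n (u w : config m n) : (forall c, u c = w c) -> degree u = degree w.
Proof. by move=> h; apply: eq_bigr => c _. Qed.

Lemma degree_ge0 m n (u : config m n) : nonneg u -> 0 <= degree u.
Proof. by move=> h; apply: sumr_ge0 => c _. Qed.

Definition redq {m n : nat} (q : 'I_m) (w : config m n) : Prop :=
  (forall c, c != inl q -> 0 <= w c) /\
  (forall C : {set vert m n}, C != set0 -> inl q \notin C ->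
     exists c, c != inl q /\ w c - toppleset C c < 0).

Definition ind {m n : nat} (C : {set vert m n}) : config m n :=
  fun c => (c \in C)%:R.

Lemma toppleset_Lap m n (C : {set vert m n}) c : toppleset C c = Lap (ind C) c.
Proof.
rewrite /toppleset /Lap big_mkcond /=; apply: eq_bigr => x _.
by rewrite /ind; case: (x \in C); rewrite ?mul1r ?mul0r.
Qed.

Lemma ind_ge0 m n (C : {set vert m n}) c : 0 <= ind C c.
Proof. by rewrite /ind; case: (c \in C). Qed.

Lemma argmax_ex m n (z : config m n) (c1 : vert m n) :
  exists c0, forall c, z c <= z c0.
Proof.
have := @arg_maxP _ _ _ c1 xpredT z isT.
case=> c0 _ H; exists c0 => c; exact: H.
Qed.

Lemma sum_const_sub k (x : int) (y : 'I_k -> int) :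
  \sum_(j < k) (x - y j) = k%:Z * x - \sum_(j < k) y j.
Proof.
by rewrite sumrB sumr_const card_ord -mulr_natr natz mulrC.
Qed.

Lemma sum_neq m (q : 'I_m) (K : int) :
  \sum_(i < m) (if i == q then 0 else K) = (m%:Z - 1) * K.
Proof.
rewrite (bigD1 q) //= eqxx add0r.
rewrite (eq_bigr (fun _ => K)); last by move=> i /negbTE ->.
rewrite sumr_const.
have -> : #|[pred i | i != q]| = m.-1 by have := cardC1 q; rewrite card_ord.
have hm : (0 < m)%N by case: q => /= i hi; apply: leq_ltn_trans hi.
rewrite -mulr_natr natz mulrC; congr (_ * _).
by lia.
Qed.

Lemma ar1 (t l y e : int) : t <= l -> 0 <= y + e - l -> e <= 0 -> y - t < 0 -> False.
Proof. lia. Qed.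
Lemma ar2 (t y : int) : t <= 0 -> 0 <= y -> y - t < 0 -> False.
Proof. lia. Qed.
Lemma lt1 (x y : int) : x <= y -> x <> y -> 1 <= y - x.
Proof. lia. Qed.

Lemma top_le_Lap m n (z : config m n) (c0 : vert m n) c :
  (forall c', z c' <= z c0) -> z c = z c0 ->
  toppleset [set c' | z c' == z c0] c <= Lap z c.
Proof.
move=> hmax hc; rewrite toppleset_Lap.
case: c hc => [i|j] hc.
- rewrite !LapA /sB hc -!sum_const_sub /ind inE hc eqxx.
  apply: ler_sum => j _; rewrite inE.
  case: eqP => [->|ne]; first by rewrite !subrr.
  by rewrite [false%:R]/= subr0 [true%:R]/= mulr1n; apply: lt1 => //; apply: hmax.
- rewrite !LapB /sA hc -!sum_const_sub /ind inE hc eqxx.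
  apply: ler_sum => i _; rewrite inE.
  case: eqP => [->|ne]; first by rewrite !subrr.
  by rewrite [false%:R]/= subr0 [true%:R]/= mulr1n; apply: lt1 => //; apply: hmax.
Qed.

Lemma top_le0 m n (C : {set vert m n}) c : c \notin C -> toppleset C c <= 0.
Proof.
move=> hc; rewrite toppleset_Lap.
case: c hc => [i|j] hc.
- rewrite LapA /ind (negbTE hc) mulr0 sub0r oppr_le0.
  by apply: sumr_ge0 => j _; case: (_ \in _).
- rewrite LapB /ind (negbTE hc) mulr0 sub0r oppr_le0.
  by apply: sumr_ge0 => k _; case: (_ \in _).
Qed.

Lemma maxprinciple m n (q : 'I_m) (Y d z : config m n) :
  redq q Y -> (forall c, c != inl q -> d c <= 0) ->
  (forall c, c != inl q -> 0 <= Y c + d c - Lap z c) ->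
  forall c, z c <= z (inl q).
Proof.
move=> [hY hs] hd hw.
have [c0 hc0] := argmax_ex z (inl q).
suff h : z c0 <= z (inl q) by move=> c; exact: le_trans (hc0 c) h.
rewrite leNgt; apply/negP => hlt.
pose C := [set c | z c == z c0].
have C0 : C != set0 by apply/set0Pn; exists c0; rewrite inE.
have qC : inl q \notin C.
  by rewrite inE; apply/negP => /eqP e; move: hlt; rewrite e ltxx.
have [c [hcq hneg]] := hs C C0 qC.
case: (boolP (c \in C)) => hcC.
- have e : z c = z c0 by move: hcC; rewrite inE => /eqP.
  have h1 := top_le_Lap hc0 e.
  have h2 := hw c hcq; have h3 := hd c hcq.
  exact: (ar1 h1 h2 h3 hneg).
- have h1 := top_le0 hcC; have h2 := hY c hcq.
  exact: (ar2 h1 h2 hneg).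
Qed.

Lemma LapA_max m n (z : config m n) i :
  (forall c, z c <= z (inl i)) -> 0 <= Lap z (inl i).
Proof.
move=> h; rewrite LapA /sB -sum_const_sub.
by apply: sumr_ge0 => j _; rewrite subr_ge0.
Qed.

Lemma ar3 (a b l : int) : a - b = l -> 0 <= b -> 0 <= a + 0 - l.
Proof. lia. Qed.
Lemma ar4 (a b l : int) : 0 <= l -> a - b = l -> 0 <= b -> 0 <= a.
Proof. lia. Qed.
Lemma ar5 (y ux uq w l : int) : y - ux + uq - w = l -> 0 <= w -> 0 <= y + (- ux + uq) - l.
Proof. lia. Qed.
Lemma ar6 (y ux uq w l : int) :
  y - ux + uq - w = l -> ux = 0 -> uq = 1 -> 0 <= w -> y <= -1 -> l <= 0.
Proof. lia. Qed.
Lemma ar7 (a b R : int) : (a - b) + R <= 0 -> 0 <= R -> b <= a -> b = a.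
Proof. lia. Qed.
Lemma ar8 (y ux uq w l : int) :
  y - ux + uq - w = l -> y = 0 -> ux = 1 -> uq = 0 -> 0 <= w -> 0 <= l -> False.
Proof. lia. Qed.
Lemma ar9 (p t : int) : p - t < 0 -> t = 0 -> 0 <= p -> False.
Proof. lia. Qed.
Lemma ar10 (p t : int) : p - t < 0 -> t = 1 -> 0 <= p -> p = 0.
Proof. lia. Qed.

Lemma eff_iff m n (q : 'I_m) (v : config m n) :
  redq q v -> (effective v <-> 0 <= v (inl q)).
Proof.
move=> hv; split.
- move=> [w [/equivE [z hz] hw]].
  have hmax : forall c, z c <= z (inl q).
    apply: (maxprinciple (d := fun _ => 0) hv) => // c _.
    exact: ar3 (hz c) (hw c).
  exact: ar4 (LapA_max hmax) (hz (inl q)) (hw (inl q)).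
- move=> h; apply: nonneg_eff => c.
  case: (boolP (c == inl q)) => [/eqP->|hc] //.
  by case: hv => hv _; exact: hv.
Qed.

Lemma GS m n (q : 'I_m) (x : 'I_n) (Y : config m n) :
  redq q Y -> Y (inl q) <= -1 -> Y (inr x) = 0 ->
  ~ effective (cadd (csub Y (unitc (inr x))) (unitc (inl q))).
Proof.
move=> hY hq hx [w [/equivE [z hz] hw]].
pose d : config m n := fun c => - unitc (inr x) c + unitc (inl q) c.
have hmax : forall c, z c <= z (inl q).
  apply: (maxprinciple (d := d) hY).
    move=> c hc; rewrite /d /unitc (negbTE hc) addr0 oppr_le0.
    by case: (_ == _).
  move=> c _; exact: ar5 (hz c) (hw c).
have u1 : unitc (inr x : vert m n) (inl q) = 0 :> int by rewrite /unitc eq_lr.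
have u2 : unitc (inl q : vert m n) (inl q) = 1 :> int by rewrite /unitc eqxx.
have u3 : unitc (inr x : vert m n) (inr x) = 1 :> int by rewrite /unitc eqxx.
have u4 : unitc (inl q : vert m n) (inr x) = 0 :> int by rewrite /unitc eq_rl.
have hS := ar6 (hz (inl q)) u1 u2 (hw (inl q)) hq.
move: hS; rewrite LapA /sB -sum_const_sub => hS.
have hxq : z (inr x) = z (inl q).
  apply: ar7 _ _ (hmax (inr x)).
    by move: hS; rewrite (bigD1 x) //= => hS; exact: hS.
  by apply: sumr_ge0 => j _; rewrite subr_ge0.
apply: (ar8 (hz (inr x)) hx u3 u4 (hw (inr x))).
rewrite LapB /sA -sum_const_sub.
by apply: sumr_ge0 => i _; rewrite subr_ge0 hxq.
Qed.

Lemma exec_red m n (q : 'I_m) (p : config m n) :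
  redq q p -> (0 < n)%N -> exists j, p (inr j) = 0.
Proof.
move=> [hp hs] hn.
pose C := [set c : vert m n | c != inl q].
have C0 : C != set0 by apply/set0Pn; exists (inr (Ordinal hn)); rewrite inE.
have qC : inl q \notin C by rewrite inE eqxx.
have [c [hcq hneg]] := hs C C0 qC.
have hc0 := hp c hcq.
move: hneg; rewrite toppleset_Lap.
case: c hcq hc0 => [i|j] hcq hc0 hneg.
- exfalso; apply: (ar9 hneg _ hc0).
  rewrite LapA /sB /ind inE hcq.
  rewrite (eq_bigr (fun _ => 1)); last by move=> j _; rewrite inE.
  by rewrite [true%:R]/= mulr1n sumr_const card_ord -mulr_natr natz; ring.
- exists j; apply: (ar10 hneg _ hc0).
  rewrite LapB /sA /ind inE hcq.
  rewrite (eq_bigr (fun i => if i == q then 0 else 1)); last first.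
    by move=> i _; rewrite inE eq_ll; case: (i == q).
  by rewrite [true%:R]/= mulr1n sum_neq mulr1; ring.
Qed.

Definition gpot {m n : nat} (q : 'I_m) : config m n :=
  fun c => match c with
           | inl i => if i == q then 0 else (m.+1)%:Z
           | inr _ => m%:Z
           end.

Lemma gpot_ge0 m n (q : 'I_m) c : 0 <= @gpot m n q c.
Proof. by case: c => [i|j] //=; case: (i == q). Qed.

Lemma Lap_gpot m n (q : 'I_m) c : (0 < n)%N -> c != inl q -> 1 <= Lap (@gpot m n q) c.
Proof.
move=> hn; case: c => [i|j] hc.
- rewrite LapA /sB /= eq_ll in hc *; rewrite (negbTE hc) sumr_const card_ord.
  rewrite -mulr_natr natz; lia.
- rewrite LapB /sA /= (eq_bigr (fun i => if i == q then 0 else (m.+1)%:Z)) //.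
  rewrite sum_neq.
  have hm : (0 < m)%N by case: q {hc} => /= i hi; apply: leq_ltn_trans hi.
  lia.
Qed.

Lemma Lap_symsum m n (g h : config m n) :
  \sum_c g c * Lap h c = \sum_c h c * Lap g c.
Proof.
rewrite /Lap.
rewrite (eq_bigr (fun c => \sum_d g c * (h d * topple d c))); last first.
  by move=> c _; rewrite mulr_sumr.
rewrite exchange_big /=; apply: eq_bigr => d _; rewrite mulr_sumr.
apply: eq_bigr => c _; rewrite topple_sym; ring.
Qed.

Definition phi {m n : nat} (q : 'I_m) (w : config m n) : int :=
  \sum_c gpot q c * w c.

Definition nnq {m n : nat} (q : 'I_m) (w : config m n) : Prop :=
  forall c, c != inl q -> 0 <= w c.

Lemma phi_ge0 m n (q : 'I_m) (w : config m n) : nnq q w -> 0 <= phi q w.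
Proof.
move=> hw; apply: sumr_ge0 => c _.
case: (boolP (c == inl q)) => [/eqP->|hc]; first by rewrite /= eqxx mul0r.
by apply: mulr_ge0; [apply: gpot_ge0 | apply: hw].
Qed.

Lemma not_red m n (q : 'I_m) (w : config m n) : nnq q w -> ~ redq q w ->
  exists C : {set vert m n}, C != set0 /\ inl q \notin C /\
     forall c, c != inl q -> 0 <= w c - toppleset C c.
Proof.
move=> hw hnr; apply: NNPP => hne; apply: hnr; split=> // C C0 qC.
apply: NNPP => hne2; apply: hne; exists C; split; first by []; split; first by []; move=> c hc.
apply: NNPP => hlt; apply: hne2; exists c; split => //.
by rewrite ltNge; apply/negP.
Qed.

Lemma ar11 (p a b : int) : 1 <= a -> 0 <= b -> p - (a + b) <= p - 1.
Proof. lia. Qed.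

Lemma red_step m n (q : 'I_m) (w : config m n) : (0 < n)%N -> nnq q w -> ~ redq q w ->
  exists w', nnq q w' /\ topp_equiv w w' /\ phi q w' <= phi q w - 1.
Proof.
move=> hn hw hnr.
have [C [C0 [qC hC]]] := not_red hw hnr.
exists (csub w (toppleset C)); split; last split.
- exact: hC.
- apply/equivE; exists (ind C) => c; rewrite /csub toppleset_Lap; ring.
- have -> : phi q (csub w (toppleset C)) = phi q w - \sum_c ind C c * Lap (gpot q) c.
    rewrite /phi /csub -Lap_symsum -sumrB; apply: eq_bigr => c _.
    by rewrite toppleset_Lap mulrBr.
  have [c1 hc1] := set0Pn _ C0.
  have hc1q : c1 != inl q by apply/negP => /eqP e; move: qC; rewrite -e hc1.
  rewrite (bigD1 c1) //= {1}/ind hc1 mul1r.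
  apply: ar11; first exact: Lap_gpot.
  apply: sumr_ge0 => c _; rewrite /ind; case: (boolP (c \in C)) => hcC.
    rewrite mul1r; apply: le_trans (Lap_gpot hn _) => //.
    by apply/negP => /eqP e; move: qC; rewrite -e hcC.
  by rewrite mul0r.
Qed.

Lemma red_ind m n (q : 'I_m) (hn : (0 < n)%N) (k : nat) (w : config m n) :
  nnq q w -> phi q w <= k%:Z -> exists v, redq q v /\ topp_equiv w v.
Proof.
elim: k w => [|k IH] w hw hk.
- case: (classic (redq q w)) => hr; first by exists w; split=> //; apply: equiv_refl.
  have [w' [hw' [_ hp]]] := red_step hn hw hr.
  have := phi_ge0 hw'; lia.
- case: (classic (redq q w)) => hr; first by exists w; split=> //; apply: equiv_refl.
  have [w' [hw' [he hp]]] := red_step hn hw hr.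
  have [v [hv he']] := IH w' hw' ltac:(lia).
  by exists v; split=> //; apply: equiv_trans he he'.
Qed.

Lemma ar12 (u t L : int) : `|u| <= t -> 1 <= L -> 0 <= u + t * L.
Proof. move=> h1 h2; have := lerNnormlW h1; nia. Qed.

Lemma red_exists m n (q : 'I_m) (hn : (0 < n)%N) (u : config m n) :
  exists v, redq q v /\ topp_equiv u v.
Proof.
pose t : int := \sum_(c : vert m n) `|u c|.
pose v0 : config m n := fun c => u c + t * Lap (gpot q) c.
have e0 : topp_equiv u v0.
  apply/equivE; exists (fun x => - t * gpot q x) => c.
  by rewrite Lap_scale /v0; ring.
have hv0 : nnq q v0.
  move=> c hc; rewrite /v0; apply: ar12 (Lap_gpot hn hc).
  rewrite /t (bigD1 c) //= lerDl.
  by apply: sumr_ge0 => x _.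
have hk : phi q v0 <= (absz (phi q v0))%:Z by rewrite abszE; apply: ler_norm.
have [v [hv he]] := red_ind hn hv0 hk.
by exists v; split=> //; apply: equiv_trans e0 he.
Qed.

Definition swapB {m n : nat} (j1 j2 : 'I_n) (c : vert m n) : vert m n :=
  match c with inl i => inl i | inr j => inr (tperm j1 j2 j) end.

Lemma Lap_swap m n (j1 j2 : 'I_n) (z : config m n) c :
  Lap (fun x => z (swapB j1 j2 x)) c = Lap z (swapB j1 j2 c).
Proof.
case: c => [i|j] /=.
- rewrite !LapA /sB /=; congr (_ - _).
  by rewrite [RHS](reindex_inj (@perm_inj _ (tperm j1 j2))).
- by rewrite !LapB /sA.
Qed.

Lemma eff_swap m n (j1 j2 : 'I_n) (u : config m n) :
  effective u -> effective (fun c => u (swapB j1 j2 c)).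
Proof.
move=> [w [/equivE [z hz] hw]].
exists (fun c => w (swapB j1 j2 c)); split; last by move=> c; apply: hw.
apply/equivE; exists (fun x => z (swapB j1 j2 x)) => c.
by rewrite Lap_swap hz.
Qed.

Lemma sA_ge m n (f : config m n) a : nonneg f -> f (inl a) <= sA f.
Proof.
move=> hf; rewrite /sA (bigD1 a) //= lerDl.
by apply: sumr_ge0 => i _.
Qed.

Definition good {m n : nat} (v f : config m n) (b : 'I_n) (f' : config m n) : Prop :=
  nonneg f' /\ degree f' = degree f /\ 1 <= f' (inr b) /\ ~ effective (csub v f').

Definition fmove {m n : nat} (f : config m n) (c1 c2 : vert m n) (t : int) : config m n :=
  fun c => f c - t * unitc c1 c + t * unitc c2 c.

Lemma degree_fmove m n (f : config m n) c1 c2 t :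
  degree (fmove f c1 c2 t) = degree f.
Proof.
rewrite /degree /fmove big_split sumrB /= -!mulr_sumr.
rewrite -/(degree (unitc c1)) -/(degree (unitc c2)) !degree_unitc; ring.
Qed.

Lemma ar14 (x : int) : -1 < x -> 0 <= x.
Proof. lia. Qed.
Lemma ar13 (x : int) : 0 <= x -> ~ 1 <= x -> x = 0.
Proof. lia. Qed.

Lemma KL_step m n (hn : (0 < n)%N) (v f : config m n) (b : 'I_n) :
  nonneg v -> v (inr b) = 0 -> nonneg f -> ~ effective (csub v f) ->
  (exists f', good v f b f') \/
  (exists a : 'I_m, exists x : 'I_n, 1 <= f (inl a) /\
     ~ effective (csub v (fmove f (inl a) (inr x) 1))).
Proof.
move=> hv hb hf hne.
case: (boolP (1 <= f (inr b))) => hfb.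
  by left; exists f; split=> //.
have hfb0 : f (inr b) = 0 by apply: ar13 (hf _) _; apply/negP.
case: (classic (exists b', v (inr b') < f (inr b'))) => [[b' hb']|hnb].
- left.
  have bb' : b' != b by apply/negP => /eqP e; move: hb'; rewrite e hb hfb0 ltxx.
  pose t := f (inr b') - v (inr b').
  have ht : 1 <= t by rewrite /t; lia.
  exists (fmove f (inr b') (inr b) t); split; last split; last split.
  + move=> c; rewrite /fmove /unitc.
    case: (c =P inr b) => [eb|nb]; case: (c =P inr b') => [eb'|nb'].
    * by exfalso; move: bb'; rewrite eb in eb'; case: eb' => ->; rewrite eqxx.
    * rewrite eb; have := hf (inr b); rewrite /t; lia.
    * rewrite eb' /t; have := hv (inr b'); lia.
    * by rewrite !mulr0 subr0 addr0.
  + exact: degree_fmove.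
  + rewrite /fmove /unitc eqxx eq_rr eq_sym (negbTE bb') hfb0; lia.
  + move=> he; apply: hne.
    apply: (eff_ext _ (eff_swap b b' he)) => c.
    rewrite /csub /fmove /unitc.
    case: c => [i|j] /=; first by rewrite !mulr0 subr0 addr0.
    rewrite !eq_rr.
    case: (j =P b) => [->|jb].
      rewrite tpermL eqxx (negbTE bb') hb hfb0 /t; ring.
    case: (j =P b') => [->|jb'].
      rewrite tpermR eqxx eq_sym (negbTE bb') hb hfb0 /t; ring.
    have h1 : b != j by apply/eqP => e; apply: jb; rewrite e.
    have h2 : b' != j by apply/eqP => e; apply: jb'; rewrite e.
    rewrite tpermD //.
    by move/eqP: jb => /negbTE ->; move/eqP: jb' => /negbTE ->; rewrite !mulr0 subr0 addr0.
- right.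
  have hfv : forall b', f (inr b') <= v (inr b').
    by move=> b'; rewrite leNgt; apply/negP => h; apply: hnb; exists b'.
  case: (classic (exists a, 1 <= f (inl a))) => [[a ha]|hna]; last first.
    exfalso; apply: hne; apply: nonneg_eff; case=> [i|j]; rewrite /csub.
      have : ~ 1 <= f (inl i) by move=> h; apply: hna; exists i.
      have := hf (inl i); have := hv (inl i); lia.
    by rewrite subr_ge0.
  exists a.
  have [p [hp hep]] := red_exists a hn (csub v f).
  have hpa : p (inl a) <= -1.
    rewrite leNgt; apply/negP => h; apply: hne.
    apply: (eff_equiv (equiv_sym hep)); apply/(eff_iff hp); exact: ar14 h.
  have [x hx] := exec_red hp hn.
  exists x; split=> // he; apply: (GS hp hpa hx).
  apply: (eff_equiv (equiv_add _ (equiv_sub _ hep))).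
  apply: eff_ext he => c; rewrite /csub /cadd /fmove; ring.
Qed.

Lemma sum_unit_l m n (a : 'I_m) : \sum_(i < m) unitc (inl a : vert m n) (inl i) = 1.
Proof.
rewrite (bigD1 a) //= {1}/unitc eqxx big1 ?addr0 //.
by move=> i hi; rewrite /unitc eq_ll (negbTE hi).
Qed.

Lemma sum_unit_lr m n (x : 'I_n) : \sum_(i < m) unitc (inr x : vert m n) (inl i) = 0.
Proof. by rewrite big1 // => i _; rewrite /unitc eq_lr. Qed.

Lemma sA_fmove m n (f : config m n) a x t :
  sA (fmove f (inl a) (inr x) t) = sA f - t.
Proof.
rewrite /sA /fmove big_split sumrB /= -!mulr_sumr sum_unit_l sum_unit_lr.
ring.
Qed.

Lemma ar17 (y : int) (b : bool) : 1 <= y -> 0 <= y - 1 * 1 + 1 * (if b then 1 else 0).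
Proof. by case: b; lia. Qed.
Lemma ar18 (y : int) (b : bool) : 0 <= y -> 0 <= y - 1 * 0 + 1 * (if b then 1 else 0).
Proof. by case: b; lia. Qed.
Lemma ar15 (a s : int) : 1 <= a -> a <= s -> s <= 0 -> False.
Proof. lia. Qed.
Lemma ar16 (s : int) (k : nat) : s <= k.+1%:Z -> s - 1 <= k%:Z.
Proof. lia. Qed.

Lemma KL m n (hn : (0 < n)%N) (v : config m n) (b : 'I_n) :
  nonneg v -> v (inr b) = 0 -> forall f, nonneg f -> ~ effective (csub v f) ->
  exists f', good v f b f'.
Proof.
move=> hv hb.
suff H : forall k : nat, forall f, nonneg f -> sA f <= k%:Z ->
    ~ effective (csub v f) -> exists f', good v f b f'.
  move=> f hf hne; apply: (H (absz (sA f))) => //.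
  by rewrite abszE; exact: ler_norm.
elim=> [|k IH] f hf hk hne; case: (KL_step hn hv hb hf hne) => // [[a [x [ha hne']]]].
- by exfalso; exact: ar15 ha (sA_ge a hf) hk.
- have hf'' : nonneg (fmove f (inl a) (inr x) 1).
    move=> c; rewrite /fmove /unitc.
    case: (c =P inl a) => [->|_].
      by move: ha; case: (_ == _); move: (f (inl a)); lia.
    by move: (hf c); case: (_ == _); move: (f c); lia.
  have hk'' : sA (fmove f (inl a) (inr x) 1) <= k%:Z by rewrite sA_fmove; exact: ar16.
  have [f' [h1 [h2 [h3 h4]]]] := IH _ hf'' hk'' hne'.
  exists f'; split => //; split => //.
  by rewrite h2 degree_fmove.
Qed.

Lemma park_spec m n (hm : (0 < m)%N) (hn : (0 < n)%N) (u : config m n) :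
  redq (Ordinal (sink_lt hm)) (park hm u) /\ topp_equiv u (park hm u).
Proof.
rewrite /park.
apply: (epsilon_spec (inhabits u) (fun v => parking hm v /\ topp_equiv u v)).
have [v [hv he]] := red_exists (Ordinal (sink_lt hm)) hn u.
by exists v; split.
Qed.

Lemma traj_red m n (hm : (0 < m)%N) (hn : (0 < n)%N) (u : config m n) idx k :
  redq (Ordinal (sink_lt hm)) (traj hm u idx k).
Proof. by case: k => [|k] /=; apply: (park_spec hm hn _).1. Qed.

Lemma ftraj0 m n (idx : nat -> 'I_n) c : ftraj (m:=m) idx 0 c = 0.
Proof. by rewrite /ftraj big_ord0. Qed.

Lemma ftrajS m n (idx : nat -> 'I_n) k c :
  ftraj (m:=m) idx k.+1 c = ftraj idx k c + unitc (bvert m (idx k)) c.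
Proof. by rewrite /ftraj big_ord_recr. Qed.

Lemma traj_equiv m n (hm : (0 < m)%N) (hn : (0 < n)%N) (u : config m n) idx k :
  topp_equiv (csub u (ftraj (m:=m) idx k)) (traj hm u idx k).
Proof.
elim: k => [|k IH] /=.
  apply: equiv_trans (park_spec hm hn u).2.
  by apply: equiv_ext => c; rewrite /csub ftraj0 subr0.
apply: equiv_trans (park_spec hm hn _).2.
apply: equiv_trans (equiv_sub _ IH).
by apply: equiv_ext => c; rewrite /csub ftrajS opprD addrA.
Qed.

Lemma degree_ftraj m n (idx : nat -> 'I_n) k : degree (ftraj (m:=m) idx k) = k%:Z.
Proof.
rewrite /degree /ftraj exchange_big /=.
rewrite (eq_bigr (fun _ => 1)); last by move=> j _; exact: degree_unitc.
by rewrite sumr_const card_ord -mulr_natr natz mul1r.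
Qed.

Lemma nonneg_ftraj m n (idx : nat -> 'I_n) k : nonneg (ftraj (m:=m) idx k).
Proof.
move=> c; rewrite /ftraj; apply: sumr_ge0 => j _.
by rewrite /unitc; case: (_ == _).
Qed.

Lemma red_nonneg m n (q : 'I_m) (v : config m n) :
  redq q v -> 0 <= v (inl q) -> nonneg v.
Proof.
move=> [hv _] hq c; case: (boolP (c == inl q)) => [/eqP->|hc] //.
exact: hv.
Qed.

Lemma rank_spec_uniq m n (u : config m n) r1 r2 :
  rank_spec u r1 -> rank_spec u r2 -> r1 = r2.
Proof.
move=> [[f1 [h1 [h1' e1]]] H1] [[f2 [h2 [h2' e2]]] H2].
have := H1 f2 h2 h2'; have := H2 f1 h1 h1'; rewrite e1 e2; lia.
Qed.

Lemma rank_eq m n (u : config m n) r : rank_spec u r -> rank u = r.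
Proof.
move=> h; apply: (rank_spec_uniq _ h).
rewrite /rank; apply: (epsilon_spec (inhabits 0) (rank_spec u)).
by exists r.
Qed.

Lemma ar19 (D : int) : D - ((absz D).+1)%:Z < 0.
Proof. have := ler_norm D; rewrite -abszE; lia. Qed.
Lemma ar20 (D : int) (k : nat) : D = (k.+1)%:Z -> D - 1 = k%:Z.
Proof. lia. Qed.
Lemma ar21 (d : nat) (x : int) : d%:Z <= x - 1 -> (d.+1)%:Z <= x.
Proof. lia. Qed.

Lemma nonneg_sub_unit m n (f : config m n) c0 :
  nonneg f -> 1 <= f c0 -> nonneg (csub f (unitc c0)).
Proof.
move=> hf h c; rewrite /csub /unitc; case: (c =P c0) => [->|_].
  by rewrite subr_ge0.
by rewrite subr0.
Qed.

Lemma lower_bound m n (hm : (0 < m)%N) (hn : (0 < n)%N) (u : config m n)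
    (idx : nat -> 'I_n) (N : nat) :
  (forall k, (k < N)%N -> legal_step hm u idx k) ->
  forall d k, (k + d = N)%N -> forall f, nonneg f ->
  ~ effective (csub (traj hm u idx k) f) -> d%:Z <= degree f.
Proof.
move=> hleg; elim=> [|d IH] k hkd f hf hne; first exact: degree_ge0.
have hk : (k < N)%N by rewrite -hkd; lia.
have [hsink hb] := hleg k hk.
have hv : nonneg (traj hm u idx k) := red_nonneg (traj_red hm hn u idx k) hsink.
have [f' [h1 [h2 [h3 h4]]]] := KL hn hv hb hf hne.
have hh := nonneg_sub_unit h1 h3.
have := IH k.+1 ltac:(lia) _ hh.
have hne' : ~ effective (csub (traj hm u idx k.+1) (csub f' (unitc (bvert m (idx k))))).
  move=> he; apply: h4.
  have e1 := equiv_sub (csub f' (unitc (bvert m (idx k))))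
     (park_spec hm hn (csub (traj hm u idx k) (unitc (bvert m (idx k))))).2.
  apply: (eff_ext _ (eff_equiv (equiv_sym e1) he)) => c.
  rewrite /csub; ring.
move=> /(_ hne'); rewrite degree_csub degree_unitc h2; exact: ar21.
Qed.

Theorem theorem2p1 (m n : nat) (hm : (0 < m)%N) (hn : (0 < n)%N)
    (u : config m n) :
  (* executability: whenever the loop condition holds after legal steps,
     some b_i has value 0 *)
  (forall (idx : nat -> 'I_n) (N : nat),
     (forall k, (k < N)%N -> legal_step hm u idx k) ->
     0 <= traj hm u idx N (sink n hm) ->
     exists i : 'I_n, traj hm u idx N (bvert m i) = 0) /\
  (* termination: no infinite sequence of legal steps *)
  (forall idx : nat -> 'I_n, ~ (forall k, legal_step hm u idx k)) /\
  (* correctness: for any choices, the final f_N is a proof for the rank,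
     and rank(u) = N - 1 = degree(f_N) - 1 *)
  (forall (idx : nat -> 'I_n) (N : nat),
     (forall k, (k < N)%N -> legal_step hm u idx k) ->
     traj hm u idx N (sink n hm) < 0 ->
     rank_proof u (ftraj (m:=m) idx N) /\
     rank u = N%:Z - 1 /\ rank u = degree (ftraj (m:=m) idx N) - 1).
Proof.
split; last split.
- move=> idx N _ _.
  exact: exec_red (traj_red hm hn u idx N) hn.
- move=> idx hleg.
  pose D := degree u.
  pose k := (absz D).+1.
  have [hs _] := hleg k.
  have hv := red_nonneg (traj_red hm hn u idx k) hs.
  have := degree_ge0 hv.
  rewrite -(degree_equiv (traj_equiv hm hn u idx k)) degree_csub degree_ftraj.
  have := ar19 D; rewrite -/k /D; lia.
- move=> idx N hleg hneg.
  have hne : ~ effective (csub u (ftraj (m:=m) idx N)).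
    move=> he; have := eff_equiv (traj_equiv hm hn u idx N) he.
    rewrite (eff_iff (traj_red hm hn u idx N)) => h.
    by move: hneg; rewrite ltNge h.
  have hlb : forall f, nonneg f -> ~ effective (csub u f) -> N%:Z <= degree f.
    move=> f hf hnf; apply: (lower_bound hn hleg (add0n N) hf) => he.
    apply: hnf; apply: (eff_equiv (equiv_sym (equiv_sub f (park_spec hm hn u).2)) he).
  have hspec : rank_spec u (N%:Z - 1).
    split.
      exists (ftraj idx N); split; first exact: nonneg_ftraj.
      by split=> //; rewrite degree_ftraj subrK.
    by move=> f hf hnf; rewrite subrK; exact: hlb.
  have hr := rank_eq hspec.
  split; last split=> //.
    split; first exact: nonneg_ftraj.
    by split=> //; rewrite degree_ftraj hr subrK.
  by rewrite degree_ftraj.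
Qed.
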